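(* Let $r\ge 1$ be an integer, let $k_1,\dots,k_r$ be integers, and let $a,b>0$ with $ab\neq \pm 1$. Then for every integer $n\ge 0$, $$\mathbf{E}_{n}^{(k_1,\dots,k_r)}(a,b)=\sum_{i=0}^{n}\binom{n}{i} r^{n-i}(\ln a+\ln b)^i(\ln a)^{n-i}\,\mathbf{E}_{i}^{(k_1,\dots,k_r)} .$$
   Context: For integers $k_1,\dots,k_r$, the multi-polylogarithm is $Li_{(k_1,\dots,k_r)}(z)=\sum_{0<m_1<m_2<\dots<m_r}\frac{z^{m_r}}{m_1^{k_1}m_2^{k_2}\cdots m_r^{k_r}}$ (sum over integers). For $c>0$, $c^t:=e^{t\ln c}$. The Multi Poly-Euler polynomials $\mathbf{E}_n^{(k_1,\dots,k_r)}(x)$ are defined by $$\frac{2Li_{(k_1,\dots,k_r)}(1-e^{-t})}{(1+e^t)^r}e^{rxt}=\sum_{n=0}^{\infty}\mathbf{E}_{n}^{(k_1,\dots,k_r)}(x)\frac{t^n}{n!},$$ and the Multi Poly-Euler numbers are $\mathbf{E}_{n}^{(k_1,\dots,k_r)}:=\mathbf{E}_{n}^{(k_1,\dots,k_r)}(0)$. The generalized Multi Poly-Euler polynomials with parameters $a,b$ are defined by $$\frac{2Li_{(k_1,\dots,k_r)}(1-(ab)^{-t})}{(a^{-t}+b^t)^r}e^{rxt}=\sum_{n=0}^{\infty}\mathbf{E}_{n}^{(k_1,\dots,k_r)}(x;a,b)\frac{t^n}{n!},$$ and $\mathbf{E}_{n}^{(k_1,\dots,k_r)}(a,b):=\mathbf{E}_{n}^{(k_1,\dots,k_r)}(0;a,b)$.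 *)

(* Defs.v *)
From Stdlib Require Import Reals ZArith List.
From Coquelicot Require Import Coquelicot.
Open Scope R_scope.

Definition inv_pow (m : nat) (k : Z) : R := / powerRZ (INR m) k.

(* nested_sum ks m0 m = sum over m0 < m_1 < ... < m_j < m of
   prod_i 1/m_i^{k_i}, where ks = [k_1; ...; k_j].  Empty list gives 1. *)
Fixpoint nested_sum (ks : list Z) (m0 m : nat) : R :=
  match ks with
  | nil => 1
  | k :: ks' =>
      sum_f_R0 (fun i => let m1 := (m0 + 1 + i)%nat in
                         if Nat.ltb m1 m then inv_pow m1 k * nested_sum ks' m1 m
                         else 0)
               (m - m0)%nat
  end.

(* Multi-polylogarithm Li_{(k_1,...,k_r)}(z)
   = sum_{0<m_1<...<m_r} z^{m_r} / (m_1^{k_1} ... m_r^{k_r}),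
   summed over the outermost index m_r (inner sums are finite).
   ks = [k_1; ...; k_r]. *)
Definition Li (ks : list Z) (z : R) : R :=
  Series (fun m => if Nat.eqb m 0 then 0
                   else z ^ m * inv_pow m (last ks 0%Z)
                        * nested_sum (removelast ks) 0 m).

Definition cpow (c t : R) : R := exp (t * ln c).

(* Multi Poly-Euler polynomials: n-th Taylor coefficient (times n!) at t = 0,
   i.e. the n-th derivative at 0, of the generating function. *)
Definition MPE_poly (ks : list Z) (x : R) (n : nat) : R :=
  let r := length ks in
  Derive_n (fun t => 2 * Li ks (1 - exp (- t)) / (1 + exp t) ^ r
                     * exp (INR r * x * t)) n 0.

Definition MPE_num (ks : list Z) (n : nat) : R := MPE_poly ks 0 n.

Definition GMPE_poly (ks : list Z) (x a b : R) (n : nat) : R :=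
  let r := length ks in
  Derive_n (fun t => 2 * Li ks (1 - cpow (a * b) (- t))
                     / (cpow a (- t) + cpow b t) ^ r
                     * exp (INR r * x * t)) n 0.

Definition GMPE_num (ks : list Z) (a b : R) (n : nat) : R := GMPE_poly ks 0 a b n.

(* Main.v *)
Require Import Defs.
From Stdlib Require Import Reals ZArith List Lia Lra.
From Coquelicot Require Import Coquelicot.
Open Scope R_scope.

Definition Dn (U : R -> Prop) (n : nat) (f : R -> R) :=
  forall k x, (k <= n)%nat -> U x -> ex_derive_n f k x.

Lemma Derive_n_Derive f j y : Derive_n (Derive f) j y = Derive_n f (S j) y.
Proof.
  revert y; induction j; intro y; simpl. reflexivity.
  apply Derive_ext; intro t; apply IHj.
Qed.

Lemma exdn_Derive f j x : ex_derive_n (Derive f) (S j) x <-> ex_derive_n f (S (S j)) x.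
Proof.
  simpl. split; apply ex_derive_ext; intro t; [apply Derive_n_Derive | symmetry; apply Derive_n_Derive].
Qed.

Lemma Dn_S U n f : Dn U (S n) f <-> (forall x, U x -> ex_derive f x) /\ Dn U n (Derive f).
Proof.
  split.
  - intros H; split.
    + intros x Hx. exact (H 1%nat x ltac:(lia) Hx).
    + intros [|k] x Hk Hx; [exact I|]. apply (proj2 (exdn_Derive f k x)). apply H; [lia|exact Hx].
  - intros [H1 H2] [|[|k]] x Hk Hx. exact I. exact (H1 x Hx). apply (proj1 (exdn_Derive f k x)), H2; [lia|exact Hx].
Qed.

Lemma Dn_le U n m f : (n <= m)%nat -> Dn U m f -> Dn U n f.
Proof. intros Hnm H k x Hk Hx; apply H; [lia|exact Hx]. Qed.

Lemma Dn_loc U n f x : open U -> U x -> Dn U n f ->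
  locally x (fun y => forall k, (k <= n)%nat -> ex_derive_n f k y).
Proof. intros HU Hx H. apply (locally_open U); [exact HU| |exact Hx]. intros y Hy k Hk; apply H; [exact Hk|exact Hy]. Qed.

Lemma Dn_ext U n f g : open U -> (forall x, U x -> f x = g x) -> Dn U n f -> Dn U n g.
Proof.
  intros HU He H k x Hk Hx. apply ex_derive_n_ext_loc with f.
  apply (locally_open U); [exact HU|exact He|exact Hx]. apply H; [exact Hk|exact Hx].
Qed.

Lemma Dn_ext_glob U n f g : (forall x, f x = g x) -> Dn U n f -> Dn U n g.
Proof. intros He H k x Hk Hx. apply ex_derive_n_ext with f; [exact He|apply H; [exact Hk|exact Hx]]. Qed.

Lemma Dn_plus U n f g : open U -> Dn U n f -> Dn U n g -> Dn U n (fun x => f x + g x).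
Proof.
  intros HU Hf Hg k x Hk Hx. apply ex_derive_n_plus.
  - apply (Dn_loc U k); [exact HU|exact Hx|exact (Dn_le U k n f Hk Hf)].
  - apply (Dn_loc U k); [exact HU|exact Hx|exact (Dn_le U k n g Hk Hg)].
Qed.

Lemma Dn_scal U n a f : Dn U n f -> Dn U n (fun x => a * f x).
Proof. intros Hf k x Hk Hx. apply ex_derive_n_scal_l; apply Hf; [exact Hk|exact Hx]. Qed.

Lemma Dn_const U n a : Dn U n (fun _ => a).
Proof. intros k x _ _. apply ex_derive_n_const. Qed.

Lemma Dn_mult U n : open U -> forall f g, Dn U n f -> Dn U n g -> Dn U n (fun x => f x * g x).
Proof.
  intros HU; induction n; intros f g Hf Hg.
  - intros k x Hk _. assert (k = 0%nat) by lia; subst; exact I.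
  - pose proof Hf as Hf'. apply Dn_S in Hf' as [Hf1 Hf2].
    pose proof Hg as Hg'. apply Dn_S in Hg' as [Hg1 Hg2].
    apply Dn_S; split.
    + intros x Hx; apply ex_derive_mult; [apply Hf1|apply Hg1]; exact Hx.
    + apply (Dn_ext U n (fun y => Derive f y * g y + f y * Derive g y)); [exact HU| |].
      * intros x Hx; symmetry; apply Derive_mult; [apply Hf1|apply Hg1]; exact Hx.
      * apply Dn_plus; [exact HU| |].
        -- apply IHn; [exact Hf2|]. exact (Dn_le U n (S n) g ltac:(lia) Hg).
        -- apply IHn; [|exact Hg2]. exact (Dn_le U n (S n) f ltac:(lia) Hf).
Qed.

Lemma Dn_comp U V n h : open U -> Dn U n h -> (forall x, U x -> V (h x)) ->
  forall f, Dn V n f -> Dn U n (fun x => f (h x)).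
Proof.
  intros HU; revert h; induction n; intros h Hh HUV f Hf.
  - intros k x Hk _. assert (k = 0%nat) by lia; subst; exact I.
  - pose proof Hh as Hh'. apply Dn_S in Hh' as [Hh1 Hh2].
    pose proof Hf as Hf'. apply Dn_S in Hf' as [Hf1 Hf2].
    apply Dn_S; split.
    + intros x Hx; apply ex_derive_comp; [apply Hf1, HUV, Hx|apply Hh1, Hx].
    + apply (Dn_ext U n (fun y => Derive h y * Derive f (h y))); [exact HU| |].
      * intros x Hx; symmetry; apply Derive_comp; [apply Hf1, HUV, Hx|apply Hh1, Hx].
      * apply Dn_mult; [exact HU|exact Hh2|].
        apply IHn; [exact (Dn_le U n (S n) h ltac:(lia) Hh)|exact HUV|exact Hf2].
Qed.

Lemma Dn_explin U n c : forall k, Dn U n (fun t => k * exp (c * t)).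
Proof.
  induction n; intros k.
  - intros j x Hj _. assert (j = 0%nat) by lia; subst; exact I.
  - apply Dn_S; split.
    + intros x _; auto_derive; exact I.
    + apply Dn_ext_glob with (fun t => (k * c) * exp (c * t)); [|apply IHn].
      intro x; symmetry; apply is_derive_unique; auto_derive; [exact I|ring].
Qed.

Lemma Dn_lin U n L : Dn U n (fun t => L * t).
Proof.
  destruct n.
  - intros j x Hj _. assert (j = 0%nat) by lia; subst; exact I.
  - apply Dn_S; split.
    + intros x _; auto_derive; exact I.
    + apply Dn_ext_glob with (fun _ => L); [|apply Dn_const].
      intro x; symmetry; apply is_derive_unique; auto_derive; [exact I|ring].
Qed.

Lemma Dn_pow U n m f : open U -> Dn U n f -> Dn U n (fun x => f x ^ m).
Proof.
  intros HU Hf; induction m.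
  - apply Dn_ext_glob with (fun _ => 1); [intro; simpl; reflexivity|apply Dn_const].
  - apply Dn_ext_glob with (fun x => f x * f x ^ m); [intro; simpl; reflexivity|].
    apply Dn_mult; [exact HU|exact Hf|exact IHm].
Qed.

Lemma Dn_u U n : open U -> Dn U n (fun s => / (1 + exp s)).
Proof.
  intros HU; induction n.
  - intros j x Hj _. assert (j = 0%nat) by lia; subst; exact I.
  - apply Dn_S; split.
    + intros x _; auto_derive. pose proof (exp_pos x); lra.
    + apply Dn_ext_glob with (fun s => / (1 + exp s) * / (1 + exp s) + (-1) * / (1 + exp s)).
      * intro x; symmetry; apply is_derive_unique; auto_derive.
        pose proof (exp_pos x); lra.
        pose proof (exp_pos x). field. lra.
      * apply Dn_plus; [exact HU| |]. apply Dn_mult; [exact HU|exact IHn|exact IHn]. apply Dn_scal; exact IHn.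
Qed.

Definition smooth U f := forall n, Dn U n f.

Lemma pascal_sum c (d : nat -> R) n :
  sum_f_R0 (fun i => Binomial.C n i * c ^ (n - i) * (d (S i) + c * d i)) n =
  sum_f_R0 (fun i => Binomial.C (S n) i * c ^ (S n - i) * d i) (S n).
Proof.
  destruct n as [|m].
  - simpl. rewrite ?C_n_0, ?C_n_n, ?(C_n_0 1), ?(C_n_n 1). simpl. ring.
  - set (N := S m).
    set (A := fun i => Binomial.C N i * c ^ (N - i) * d (S i)).
    set (B := fun i => Binomial.C N i * c ^ (N - i) * (c * d i)).
    set (T := fun i => Binomial.C (S N) i * c ^ (S N - i) * d i).
    transitivity (sum_f_R0 (fun i => A i + B i) N).
    { apply sum_eq; intros i _; unfold A, B; ring. }
    rewrite plus_sum.
    unfold N at 1; rewrite tech5. fold N.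
    rewrite (decomp_sum B N) by (unfold N; lia). unfold N at 2; simpl pred.
    rewrite (decomp_sum T (S N)) by lia. simpl pred.
    unfold N at 2; rewrite tech5. fold N.
    assert (E0 : T 0%nat = B 0%nat).
    { unfold T, B. rewrite !C_n_0, !Nat.sub_0_r. simpl. ring. }
    assert (E1 : T (S N) = A N).
    { unfold T, A. rewrite !C_n_n, !Nat.sub_diag. ring. }
    assert (E2 : sum_f_R0 (fun i => T (S i)) m = sum_f_R0 (fun i => A i + B (S i)) m).
    { apply sum_eq; intros i Hi. unfold T, A, B.
      rewrite <- pascal by (unfold N; lia).
      replace (S N - S i)%nat with (N - i)%nat by lia.
      replace (N - i)%nat with (S (N - S i)) by (unfold N; lia). simpl. ring. }
    rewrite E0, E1, E2, plus_sum. ring.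
Qed.

Lemma smooth_D U g : smooth U g -> smooth U (Derive g).
Proof. intros Hg m. exact (proj2 (proj1 (Dn_S U m g) (Hg (S m)))). Qed.

Lemma leib U c : open U -> forall n g x, smooth U g -> U x ->
  Derive_n (fun t => g t * exp (c * t)) n x =
  sum_f_R0 (fun i => Binomial.C n i * c ^ (n - i) * Derive_n g i x) n * exp (c * x).
Proof.
  intros HU n; induction n; intros g x Hg Hx.
  - simpl. rewrite C_n_0. ring.
  - rewrite <- Derive_n_Derive.
    set (g' := fun t => Derive g t + c * g t).
    assert (Hs' : smooth U g').
    { intro m. apply Dn_plus; [exact HU| |]. exact (smooth_D U g Hg m). apply Dn_scal; exact (Hg m). }
    rewrite (Derive_n_ext_loc _ (fun t => g' t * exp (c * t))).
    2: { apply (locally_open U); [exact HU| |exact Hx]. intros y Hy. unfold g'.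
         rewrite Derive_mult.
         - replace (Derive (fun t => exp (c*t)) y) with (c * exp (c*y)). ring.
           symmetry; apply is_derive_unique; auto_derive; [exact I | ring].
         - exact (proj1 (proj1 (Dn_S U 0 g) (Hg 1%nat)) y Hy).
         - auto_derive; exact I. }
    etransitivity; [exact (IHn g' x Hs' Hx)|].
    rewrite <- (pascal_sum c (fun i => Derive_n g i x)).
    f_equal. apply sum_eq; intros i Hi. f_equal.
    unfold g'. rewrite Derive_n_plus.
    + rewrite Derive_n_scal_l, Derive_n_Derive. reflexivity.
    + apply (Dn_loc U i); [exact HU|exact Hx|exact (smooth_D U g Hg i)].
    + apply (Dn_loc U i); [exact HU|exact Hx|]. apply Dn_scal; exact (Hg i).
Qed.

Lemma INR_S_le_pow2 m : INR (S m) <= 2 ^ m.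
Proof.
  induction m. simpl; lra.
  rewrite (S_INR (S m)). change (2 ^ S m) with (2 * 2 ^ m). pose proof (pow_R1_Rle 2 m ltac:(lra)). lra.
Qed.

Lemma INR_le_pow2 m : INR m <= 2 ^ m.
Proof. pose proof (INR_S_le_pow2 m). rewrite S_INR in H. lra. Qed.

Lemma inv_pow_bound j m k : (1 <= j <= m)%nat ->
  Rabs (inv_pow j k) <= (2 ^ Z.abs_nat k) ^ m.
Proof.
  intros Hj. unfold inv_pow.
  assert (Hx : 1 <= INR j) by (apply (le_INR 1); lia).
  assert (H1 : forall p, 1 <= (2 ^ p) ^ m).
  { intro p. apply pow_R1_Rle, pow_R1_Rle; lra. }
  destruct k as [|p|p]; simpl powerRZ.
  - rewrite Rinv_1, Rabs_R1. apply H1.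
  - pose proof (pow_R1_Rle _ (Pos.to_nat p) Hx).
    rewrite Rabs_pos_eq.
    + apply Rle_trans with 1; [|apply H1].
      rewrite <- Rinv_1. apply Rinv_le_contravar; lra.
    + left; apply Rinv_0_lt_compat; lra.
  - rewrite Rinv_inv. pose proof (pow_R1_Rle _ (Pos.to_nat p) Hx).
    rewrite Rabs_pos_eq by lra.
    simpl Z.abs_nat.
    apply Rle_trans with ((2 ^ m) ^ Pos.to_nat p).
    + apply pow_incr. split; [lra|]. apply Rle_trans with (INR m).
      apply le_INR; lia. apply INR_le_pow2.
    + rewrite <- !pow_mult, Nat.mul_comm. lra.
Qed.

Lemma sum_bound (g : nat -> R) M N : (forall i, (i <= N)%nat -> g i <= M) ->
  sum_f_R0 g N <= INR (S N) * M.
Proof.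
  induction N; intros H.
  - simpl. specialize (H 0%nat ltac:(lia)). lra.
  - rewrite tech5. rewrite (S_INR (S N)).
    pose proof (IHN (fun i Hi => H i ltac:(lia))). pose proof (H (S N) ltac:(lia)). lra.
Qed.

Lemma nested_bound ks : exists B, 1 <= B /\ forall m0 m, Rabs (nested_sum ks m0 m) <= B ^ m.
Proof.
  induction ks as [|k ks [B' [HB' IH]]].
  - exists 1. split; [lra|]. intros m0 m. simpl. rewrite Rabs_R1, pow1. lra.
  - set (K := 2 ^ Z.abs_nat k).
    assert (HK : 1 <= K) by (apply pow_R1_Rle; lra).
    exists (2 * (K * B')). split. nra.
    intros m0 m. simpl nested_sum.
    eapply Rle_trans; [apply sum_f_R0_triangle|].
    eapply Rle_trans; [apply (sum_bound _ ((K * B') ^ m))|].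
    + intros i Hi. destruct (Nat.ltb (m0 + 1 + i) m) eqn:E.
      * apply Nat.ltb_lt in E. rewrite Rabs_mult, Rpow_mult_distr.
        apply Rmult_le_compat; try apply Rabs_pos.
        -- apply inv_pow_bound; lia.
        -- apply IH.
      * rewrite Rabs_R0. apply pow_le. nra.
    + rewrite (Rpow_mult_distr 2 (K * B') m).
      assert (0 <= (K * B') ^ m) by (apply pow_le; nra).
      apply Rmult_le_compat_r; [exact H|].
      apply Rle_trans with (INR (S m)); [apply le_INR; lia|apply INR_S_le_pow2].
Qed.

Definition cf (ks : list Z) (m : nat) : R :=
  if Nat.eqb m 0 then 0 else inv_pow m (last ks 0%Z) * nested_sum (removelast ks) 0 m.

Lemma Li_eq ks z : Li ks z = PSeries (cf ks) z.
Proof.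
  unfold Li, PSeries. apply Series_ext; intro m. unfold cf.
  destruct (Nat.eqb m 0); ring.
Qed.

Lemma cf_bound ks : exists B, 1 <= B /\ forall m, Rabs (cf ks m) <= B ^ m.
Proof.
  destruct (nested_bound (removelast ks)) as [B' [HB' H]].
  set (K := 2 ^ Z.abs_nat (last ks 0%Z)).
  assert (HK : 1 <= K) by (apply pow_R1_Rle; lra).
  exists (K * B'). split. nra. intro m. unfold cf.
  destruct (Nat.eqb m 0) eqn:E.
  - rewrite Rabs_R0. apply pow_le; nra.
  - apply Nat.eqb_neq in E. rewrite Rabs_mult, Rpow_mult_distr.
    apply Rmult_le_compat; try apply Rabs_pos.
    + apply inv_pow_bound; lia.
    + apply H.
Qed.

Lemma cf_radius ks : exists rho, 0 < rho /\ Rbar_lt rho (CV_radius (cf ks)).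
Proof.
  destruct (cf_bound ks) as [B [HB H]].
  exists (/ (2 * B)). split. apply Rinv_0_lt_compat; lra.
  apply Rbar_lt_le_trans with (/ B).
  - simpl. apply Rinv_lt_contravar; nra.
  - apply (proj1 (CV_radius_bounded (cf ks))). exists 1. intro n.
    rewrite Rabs_mult, pow_inv, Rabs_inv, (Rabs_pos_eq (B ^ n)) by (apply pow_le; lra).
    assert (0 < B ^ n) by (apply pow_lt; lra).
    specialize (H n). apply (Rmult_le_compat_r (/ B ^ n)) in H; [|left; apply Rinv_0_lt_compat; lra].
    rewrite Rinv_r in H by lra. exact H.
Qed.

Definition F (ks : list Z) (s : R) : R :=
  2 * PSeries (cf ks) (1 - exp (- s)) * (/ (1 + exp s)) ^ length ks.

Lemma F_smooth ks : exists U, open U /\ U 0 /\ smooth U (F ks).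
Proof.
  destruct (cf_radius ks) as [rho [Hr Hrad]].
  set (V := fun z => - rho < z /\ z < rho).
  set (U := fun s => V (1 - exp (- s))).
  assert (HV : open V) by (apply open_and; [apply open_gt|apply open_lt]).
  assert (HU : open U).
  { apply (open_comp (fun s => 1 - exp (- s)) V); [|exact HV].
    intros x _. assert (Hd : ex_derive (fun s => 1 - exp (- s)) x) by (auto_derive; exact I).
    exact (ex_derive_continuous _ _ Hd). }
  exists U. split; [exact HU|]. split.
  { unfold U, V. rewrite Ropp_0, exp_0. lra. }
  intro n. unfold F. apply Dn_mult; [exact HU| |].
  - apply Dn_scal. apply (Dn_comp U V n (fun s => 1 - exp (- s))); [exact HU| | |].
    + apply Dn_ext_glob with (fun s => 1 + (-1) * exp ((-1) * s)).
      * intro x. replace ((-1) * x) with (- x) by ring. ring.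
      * apply Dn_plus; [exact HU|apply Dn_const|apply Dn_explin].
    + intros x Hx; exact Hx.
    + intros k z Hk Hz. apply ex_derive_n_PSeries.
      apply Rbar_lt_trans with rho; [|exact Hrad].
      simpl. destruct Hz. apply Rabs_def1; lra.
  - apply Dn_pow; [exact HU|apply Dn_u; exact HU].
Qed.

Lemma MPE_F ks i : MPE_num ks i = Derive_n (F ks) i 0.
Proof.
  unfold MPE_num, MPE_poly. cbv zeta. apply Derive_n_ext. intro t. unfold F.
  rewrite Li_eq. replace (INR (length ks) * 0 * t) with 0 by ring. rewrite exp_0.
  unfold Rdiv. rewrite pow_inv. ring.
Qed.

Lemma exp_INR_mult n y : exp (INR n * y) = exp y ^ n.
Proof.
  induction n. simpl. rewrite Rmult_0_l, exp_0; reflexivity.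
  rewrite S_INR. replace ((INR n + 1) * y) with (INR n * y + y) by ring.
  rewrite exp_plus, IHn. simpl. ring.
Qed.

Lemma GMPE_eq ks a b t : 0 < a -> 0 < b ->
  2 * Li ks (1 - cpow (a * b) (- t)) / (cpow a (- t) + cpow b t) ^ length ks
    * exp (INR (length ks) * 0 * t) =
  F ks ((ln a + ln b) * t) * exp ((INR (length ks) * ln a) * t).
Proof.
  intros Ha Hb. unfold cpow, F. rewrite Li_eq, ln_mult by lra.
  replace (- t * (ln a + ln b)) with (- ((ln a + ln b) * t)) by ring.
  replace (INR (length ks) * 0 * t) with 0 by ring. rewrite exp_0.
  assert (HD : exp (- t * ln a) + exp (t * ln b) = / exp (t * ln a) * (1 + exp ((ln a + ln b) * t))).
  { replace ((ln a + ln b) * t) with (t * ln a + t * ln b) by ring.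
    replace (- t * ln a) with (- (t * ln a)) by ring.
    rewrite exp_plus, exp_Ropp. pose proof (exp_pos (t * ln a)). field. lra. }
  rewrite HD.
  replace (INR (length ks) * ln a * t) with (INR (length ks) * (t * ln a)) by ring.
  rewrite exp_INR_mult.
  pose proof (exp_pos (t * ln a)). pose proof (exp_pos ((ln a + ln b) * t)).
  rewrite Rpow_mult_distr, !pow_inv. field.
  split; apply pow_nonzero; lra.
Qed.

Theorem theorem2 (ks : list Z) (a b : R) :
  (1 <= length ks)%nat -> 0 < a -> 0 < b -> a * b <> 1 -> a * b <> -1 ->
  forall n : nat,
    GMPE_num ks a b n =
    sum_f_R0 (fun i => Binomial.C n i * INR (length ks) ^ (n - i)
                        * (ln a + ln b) ^ i * (ln a) ^ (n - i) * MPE_num ks i) n.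
Proof.
  intros Hr Ha Hb _ _ n.
  destruct (F_smooth ks) as [U [HU [H0 HF]]].
  set (L := ln a + ln b). set (c := INR (length ks) * ln a).
  set (U' := fun t => U (L * t)).
  assert (HU' : open U').
  { apply (open_comp (fun t => L * t) U); [|exact HU].
    intros x _. assert (Hd : ex_derive (fun t => L * t) x) by (auto_derive; exact I).
    exact (ex_derive_continuous _ _ Hd). }
  assert (H0' : U' 0) by (unfold U'; rewrite Rmult_0_r; exact H0).
  assert (Hsm : smooth U' (fun t => F ks (L * t))).
  { intro m. exact (Dn_comp U' U m (fun t => L * t) HU' (Dn_lin U' m L) (fun x Hx => Hx) (F ks) (HF m)). }
  unfold GMPE_num, GMPE_poly. cbv zeta.
  rewrite (Derive_n_ext _ (fun t => F ks (L * t) * exp (c * t))) by (intro; apply GMPE_eq; assumption).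
  etransitivity; [exact (leib U' c HU' n (fun t => F ks (L * t)) 0 Hsm H0')|].
  rewrite Rmult_0_r, exp_0, Rmult_1_r.
  apply sum_eq; intros i Hi.
  rewrite Derive_n_comp_scal.
  - rewrite Rmult_0_r, MPE_F. unfold c. rewrite Rpow_mult_distr. ring.
  - rewrite Rmult_0_r. apply (Dn_loc U i); [exact HU|exact H0|exact (HF i)].
Qed.
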